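(* Let $\Gamma$ be a simple graph on a finite set $X$ with $|X|\ge3$. 1. $G(\Gamma)$ acts transitively on $X$ if and only if the localized graphs ${}^x\Gamma$, $x\in X$, are pairwise isomorphic. 2. If $G(\Gamma)$ acts doubly transitively on $X$, then for each $x\in X$ the automorphism group $\mathrm{Aut}({}^x\Gamma)$ acts transitively on $X\setminus\{x\}$. 3. If for two distinct points $x,y\in X$ the groups $\mathrm{Aut}({}^x\Gamma)$ and $\mathrm{Aut}({}^y\Gamma)$ act transitively on $X\setminus\{x\}$ and $X\setminus\{y\}$ respectively, then $G(\Gamma)$ acts doubly transitively on $X$.
   Context: The matrix $\mathcal{E}=(\varepsilon_{i,j})$ of a simple graph on $X$ has $\varepsilon_{i,j}=-1$ if $i\ne j$ are adjacent and $1$ otherwise. Graphs with matrices $\mathcal{E},\mathcal{E}'$ are associated if $\varepsilon'_{i,j}=\nu_i\nu_j\varepsilon_{i,j}$ for some $\nu_i\in\{\pm1\}$. $G(\Gamma)$ is the group of permutations $\sigma$ of $X$ such that $\Gamma$ and its image ${}^\sigma\Gamma$ under $\sigma$ are associated. ${}^x\Gamma$ is the unique graph associated to $\Gamma$ in which $x$ is isolated. *)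

(* Defs.v *)
From mathcomp Require Import all_boot all_order all_algebra all_fingroup.
Set Implicit Arguments. Unset Strict Implicit. Unset Printing Implicit Defensive.
Import GRing.Theory.
Local Open Scope ring_scope.

Definition simple_graph (X : finType) (e : rel X) : Prop :=
  symmetric e /\ irreflexive e.

Definition sgnb (b : bool) : int := if b then -1 else 1.

Definition eps (X : finType) (e : rel X) (i j : X) : int :=
  if (i != j) && e i j then -1 else 1.

Definition associated (X : finType) (e e' : rel X) : bool :=
  [exists nu : {ffun X -> bool},
     [forall i, [forall j, eps e' i j == sgnb (nu i) * sgnb (nu j) * eps e i j]]].

Definition img_graph (X : finType) (s : {perm X}) (e : rel X) : rel X :=
  fun u v => e ((s^-1)%g u) ((s^-1)%g v).

Definition Ggroup (X : finType) (e : rel X) : {set {perm X}} :=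
  [set s : {perm X} | associated e (img_graph s e)].

Definition switch (X : finType) (e : rel X) (nu : X -> bool) : rel X :=
  fun i j => (i != j) && (sgnb (nu i) * sgnb (nu j) * eps e i j == -1).

(* the localized graph ^x Gamma: switching with respect to the neighbourhood
   of x (nu_y = -1 iff y ~ x); this is the unique graph associated to Gamma in
   which x is isolated. *)
Definition localized (X : finType) (e : rel X) (x : X) : rel X :=
  switch e (fun y => e x y).

Definition isomorphic (X : finType) (e1 e2 : rel X) : Prop :=
  exists s : {perm X}, forall i j, e2 (s i) (s j) = e1 i j.

(* Aut(^x Gamma), viewed as a graph on X \ {x}: permutations of X fixing x
   and preserving the localized graph. *)
Definition Aut_loc (X : finType) (e : rel X) (x : X) : {set {perm X}} :=
  [set s : {perm X} | (s x == x) &&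
     [forall i, [forall j, localized e x (s i) (s j) == localized e x i j]]].

Definition transitive_on (X : finType) (G : {set {perm X}}) (A : {set X}) : Prop :=
  forall y z, y \in A -> z \in A -> exists2 s, s \in G & s y = z.

Definition doubly_transitive (X : finType) (G : {set {perm X}}) : Prop :=
  forall x1 x2 y1 y2 : X, x1 != x2 -> y1 != y2 ->
    exists2 s, s \in G & s x1 = y1 /\ s x2 = y2.

(* Main.v *)
Require Import Defs.
From mathcomp Require Import all_boot all_order all_algebra all_fingroup.
Set Implicit Arguments. Unset Strict Implicit. Unset Printing Implicit Defensive.
Import GRing.Theory.
Local Open Scope ring_scope.

Definition E (X : finType) (e : rel X) (i j : X) : bool := (i != j) && e i j.
Definition Lb (X : finType) (e : rel X) (x i j : X) : bool :=
  E e x i (+) E e x j (+) E e i j.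
Definition PG (X : finType) (e : rel X) (s : {perm X}) : Prop :=
  forall y a b, Lb e (s y) (s a) (s b) = Lb e y a b.

Lemma epsE (X : finType) (e : rel X) i j : eps e i j = sgnb (E e i j).
Proof. by []. Qed.

Lemma sgnbM a b : sgnb a * sgnb b = sgnb (a (+) b).
Proof. by case: a; case: b; rewrite /sgnb /= ?mulr1 ?mul1r ?mulrNN ?mulr1. Qed.

Lemma sgnb_inj : injective sgnb.
Proof. by case; case => //= /eqP. Qed.

Lemma sgnbN1 b : (sgnb b == -1) = b.
Proof. by case: b. Qed.

Lemma assocP (X : finType) (e e' : rel X) :
  associated e e' <-> forall x i j, Lb e x i j = Lb e' x i j.
Proof.
split.
  move=> /existsP [nu /forallP H].
  have H' : forall i j, E e' i j = nu i (+) nu j (+) E e i j.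
    move=> i j; move/forallP: (H i) => /(_ j) /eqP.
    by rewrite !epsE !sgnbM; apply: sgnb_inj.
  move=> x i j; rewrite /Lb !H'.
  move: (nu x) (nu i) (nu j) (E e x i) (E e x j) (E e i j).
  by do 6! case.
move=> H; apply/existsP.
case: (pickP (fun _ : X => true)) => [x0 _|X0]; last first.
  by exists [ffun i => false]; apply/forallP => i; have := X0 i.
exists [ffun i => E e x0 i (+) E e' x0 i]; apply/forallP => i; apply/forallP => j.
rewrite !epsE !sgnbM !ffunE; apply/eqP; congr sgnb.
move: (H x0 i j); rewrite /Lb.
move: (E e x0 i) (E e x0 j) (E e i j) (E e' x0 i) (E e' x0 j) (E e' i j).
by do 6! case.
Qed.

Lemma imgE (X : finType) (e : rel X) (s : {perm X}) i j :
  E (img_graph s e) i j = E e (s^-1 i)%g (s^-1 j)%g.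
Proof. by rewrite /E /img_graph (inj_eq (@perm_inj _ (s^-1)%g)). Qed.

Lemma GP (X : finType) (e : rel X) s : s \in Ggroup e <-> PG e s.
Proof.
rewrite inE; split.
  move=> /assocP H y a b; have := H (s y) (s a) (s b).
  by rewrite /Lb !imgE !permK.
move=> HP; apply/assocP => x i j; rewrite /Lb !imgE.
by have := HP (s^-1 x)%g (s^-1 i)%g (s^-1 j)%g; rewrite /Lb !permKV.
Qed.

Lemma Lsw (X : finType) (e : rel X) (y z a b : X) :
  Lb e z a b = Lb e y z a (+) Lb e y z b (+) Lb e y a b.
Proof.
rewrite /Lb.
move: (E e z a) (E e z b) (E e a b) (E e y z) (E e y a) (E e y b).
by do 6! case.
Qed.

Lemma Lbxx (X : finType) (e : rel X) x a : Lb e x x a = false.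
Proof. by rewrite /Lb /E eqxx /= addbb. Qed.

Lemma Lb_sym (X : finType) (e : rel X) : symmetric e ->
  forall y a b, Lb e y a b = Lb e y b a.
Proof.
move=> Hs y a b.
have Es : forall u v, E e u v = E e v u by move=> u v; rewrite /E eq_sym Hs.
by rewrite /Lb (Es a b) [E e y a (+) _]addbC.
Qed.


Lemma locE (X : finType) (e : rel X) x i j : irreflexive e ->
  localized e x i j = Lb e x i j.
Proof.
move=> Hi.
have Ex : forall k, sgnb (e x k) = sgnb (E e x k).
  move=> k; rewrite /E; case: (eqVneq x k) => [<-|//].
  by rewrite Hi.
rewrite /localized /switch !Ex epsE !sgnbM sgnbN1.
case: (eqVneq i j) => [<-|//].
by rewrite /Lb /E eqxx /= addbb.
Qed.

Lemma PG_mul (X : finType) (e : rel X) s t : PG e s -> PG e t -> PG e (s * t)%g.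
Proof. by move=> Hs Ht y a b; rewrite !permM Ht Hs. Qed.

Lemma PG_inv (X : finType) (e : rel X) s : PG e s -> PG e (s^-1)%g.
Proof.
move=> Hs y a b; have := Hs (s^-1 y)%g (s^-1 a)%g (s^-1 b)%g.
by rewrite !permKV => ->.
Qed.

Lemma PG_single (X : finType) (e : rel X) (s : {perm X}) x :
  (forall a b, Lb e (s x) (s a) (s b) = Lb e x a b) -> PG e s.
Proof.
by move=> H w a b; rewrite (Lsw e (s x) (s w)) !H (Lsw e x w a b).
Qed.

Lemma Aut_locP (X : finType) (e : rel X) x (s : {perm X}) : irreflexive e ->
  s \in Aut_loc e x <-> (s x = x /\ forall i j, Lb e x (s i) (s j) = Lb e x i j).
Proof.
move=> Hi; rewrite inE; split.
  move=> /andP [/eqP -> /forallP H]; split=> // i j.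
  by move/forallP: (H i) => /(_ j) /eqP; rewrite !locE.
move=> [-> H]; rewrite eqxx /=; apply/forallP => i; apply/forallP => j.
by rewrite !locE // H.
Qed.

Lemma Aut_PG (X : finType) (e : rel X) x (s : {perm X}) : irreflexive e ->
  s \in Aut_loc e x -> PG e s.
Proof.
move=> Hi /(Aut_locP _ _ Hi) [Hx H]; apply: (PG_single (x := x)) => a b.
by rewrite Hx H.
Qed.

Local Close Scope ring_scope.

Theorem proposition4 (X : finType) (e : rel X) :
  simple_graph e -> 2 < #|X| ->
  [/\ (transitive_on (Ggroup e) [set: X] <->
         (forall x y : X, isomorphic (localized e x) (localized e y))),
      (doubly_transitive (Ggroup e) ->
         forall x : X, transitive_on (Aut_loc e x) [set~ x])
    & (forall x y : X, x != y ->
         transitive_on (Aut_loc e x) [set~ x] ->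
         transitive_on (Aut_loc e y) [set~ y] ->
         doubly_transitive (Ggroup e))].
Proof.
move=> [Hsym Hirr] HX; split.
- split.
  + move=> Htr x y; have [s Hs Hsx] := Htr x y (in_setT x) (in_setT y).
    exists s => i j; rewrite !locE //; move/GP: Hs => Hs.
    by rewrite -Hsx Hs.
  + move=> Hiso x y _ _; have [s Hs] := Hiso x y.
    have Hs' : forall i j, Lb e y (s i) (s j) = Lb e x i j.
      by move=> i j; rewrite -!locE.
    have Hz : forall w, Lb e y (s x) w = false.
      by move=> w; rewrite -(permKV s w) Hs' Lbxx.
    have PGs : PG e s.
      apply: (PG_single (x := x)) => a b.
      by rewrite (Lsw e y (s x)) !Hs' !Lbxx /=.
    have Pt : PG e (tperm (s x) y).
      apply: (PG_single (x := y)) => a b.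
      rewrite tpermR (Lsw e y (s x)) !Hz /=.
      have Hz' : forall w, Lb e y w (s x) = false by move=> w; rewrite Lb_sym.
      have Hy : forall w, Lb e y y w = false by move=> w; rewrite Lbxx.
      have Hy' : forall w, Lb e y w y = false by move=> w; rewrite Lb_sym // Lbxx.
      case: (tpermP (s x) y a) => [->|->|Ha1 Ha2].
      * by rewrite Hy Hz.
      * by rewrite Hz Hy.
      case: (tpermP (s x) y b) => [->|->|Hb1 Hb2] //.
      * by rewrite Hy' Hz'.
      * by rewrite Hz' Hy'.
    exists (s * tperm (s x) y)%g; first by apply/GP; apply: PG_mul.
    by rewrite permM tpermL.
- move=> Hdt x y z; rewrite !in_setC1 => Hy Hz.
  have Hxy : x != y by rewrite eq_sym.
  have Hxz : x != z by rewrite eq_sym.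
  have [s Hs [Hsx Hsy]] := Hdt x y x z Hxy Hxz.
  exists s => //; apply/Aut_locP => //; split=> // i j.
  move/GP: Hs => Hs; have := Hs x i j; by rewrite Hsx.
- move=> x y Hxy HA HB.
  have inC : forall a b : X, a != b -> a \in [set~ b] by move=> a b; rewrite in_setC1.
  have [u Hu] : exists u, (u != x) && (u != y).
    case: (boolP [exists u, (u != x) && (u != y)]) => [/existsP //|Hn]; exfalso.
    have Hsub : [set: X] \subset [set x; y].
      apply/subsetP => v _; rewrite !inE.
      case: (eqVneq v x) => //= Hvx; case: (eqVneq v y) => //= Hvy.
      by case/negP: Hn; apply/existsP; exists v; rewrite Hvx Hvy.
    have := subset_leq_card Hsub; rewrite cardsT cards2 Hxy.
    by rewrite leqNgt HX.
  move/andP: Hu => [Hux Huy].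
  have Hyx : y != x by rewrite eq_sym.
  have T : forall w, exists2 g, PG e g & g x = w.
    move=> w; case: (eqVneq w y) => [->|Hwy].
      have [h1 H1 H1x] := HB x u (inC _ _ Hxy) (inC _ _ Huy).
      have [h2 H2 H2u] := HA u y (inC _ _ Hux) (inC _ _ Hyx).
      exists (h1 * h2)%g; last by rewrite permM H1x.
      exact: PG_mul (Aut_PG Hirr H1) (Aut_PG Hirr H2).
    have [h H Hx] := HB x w (inC _ _ Hxy) (inC _ _ Hwy).
    by exists h => //; exact: Aut_PG Hirr H.
  have F : forall x1 x2, x1 != x2 -> exists2 f, PG e f & f x1 = x /\ f x2 = y.
    move=> x1 x2 H12; have [g Hg Hgx] := T x1.
    have Hx2 : (g^-1 x2)%g != x.
      apply: contra H12 => /eqP H; by rewrite -Hgx -H permKV.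
    have [h Hh Hhv] := HA (g^-1 x2)%g y (inC _ _ Hx2) (inC _ _ Hyx).
    exists (g^-1 * h)%g; first exact: PG_mul (PG_inv Hg) (Aut_PG Hirr Hh).
    move/(Aut_locP _ _ Hirr): Hh => [Hhx _].
    by rewrite !permM -Hgx permK Hhx Hhv.
  move=> x1 x2 y1 y2 H12 Hy12.
  have [f Hf [f1 f2]] := F _ _ H12; have [f' Hf' [f1' f2']] := F _ _ Hy12.
  exists (f * f'^-1)%g; first by apply/GP; exact: PG_mul Hf (PG_inv Hf').
  by rewrite !permM f1 f2 -f1' -f2' !permK.
Qed.
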